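(* Let $k \ge 1$, $N \ge 0$ and $0 \le \alpha \le N$ be integers and let $T = [t_1,\dots,t_k]$ with $t_1 \ge t_2 \ge \dots \ge t_k \ge 0$. Let $X = \{x \in \mathbb{Z}_{\ge 0}^k : \sum_{i=1}^k x_i \le N\}$ and let $f: X \to \mathbb{R}$ be the adversarial objective $f(x) = \min_{\delta \in \Delta_\alpha(x)} \sum_{i=1}^k t_i H(x_i - \delta_i)$. Then there exists $\tilde{x} \in X$ with $f(\tilde{x}) = \max_{x \in X} f(x)$ and $\tilde{x}_1 \ge \tilde{x}_2 \ge \dots \ge \tilde{x}_k$.
   Context: $H(n) = \min(1,n)$ for integers $n \ge 0$ (the indicator that a task with $n$ surviving agents is completed). For $x \in \mathbb{Z}_{\ge 0}^k$, the set of admissible attacks is $\Delta_\alpha(x) = \{\delta \in \mathbb{Z}_{\ge 0}^k : \sum_{i=1}^k \delta_i \le \alpha \text{ and } \delta_i \le x_i \text{ for all } i\}$; $\delta_i$ is the number of agents on task $i$ disabled by an adversary. Problem 2 (adversarial failure) is to maximize $f$ over $X$. *)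

(* Defs.v *)
From mathcomp Require Import all_boot all_order all_algebra.
Set Implicit Arguments. Unset Strict Implicit. Unset Printing Implicit Defensive.
Import Order.TTheory GRing.Theory Num.Theory.
Local Open Scope ring_scope.

Definition Hfun (R : numDomainType) (n : nat) : R := (minn 1 n)%:R.

Definition admissible (k alpha : nat) (x delta : 'I_k -> nat) : bool :=
  ((\sum_(i < k) delta i)%N <= alpha)%N && [forall i, (delta i <= x i)%N].

(* sum_i t_i H(x_i - delta_i)  (truncated subtraction; delta_i <= x_i anyway) *)
Definition attacked_value (R : numDomainType) (k : nat) (t : 'I_k -> R)
  (x delta : 'I_k -> nat) : R :=
  \sum_(i < k) t i * Hfun R (x i - delta i)%N.

(* Every admissible delta satisfies
   delta_i <= x_i, so when every x_i <= N it is encoded as a finite function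
   'I_k -> 'I_(N.+1).  The min is seeded with the value at delta = 0, which is
   itself admissible, so the seed does not change the minimum. *)
Definition adv_obj (R : realDomainType) (k N alpha : nat) (t : 'I_k -> R)
  (x : 'I_k -> nat) : R :=
  \big[Order.min/attacked_value t x (fun _ => 0%N)]_(d : {ffun 'I_k -> 'I_N.+1}
       | admissible alpha x (fun i => nat_of_ord (d i)))
     attacked_value t x (fun i => nat_of_ord (d i)).

Definition feasible (k N : nat) (x : 'I_k -> nat) : Prop :=
  ((\sum_(i < k) x i)%N <= N)%N.

(* Main.v *)
Require Import Defs.
From mathcomp Require Import all_boot all_order all_algebra.
From mathcomp Require Import zify ring lra.
From Stdlib Require Import FunctionalExtensionality.
Import Order.TTheory GRing.Theory Num.Theory.
Local Open Scope ring_scope.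

Lemma split2n {k : nat} (i j : 'I_k) (F : 'I_k -> nat) : i != j ->
  (\sum_(l < k) F l = F i + F j + \sum_(l < k | (l != i) && (l != j)) F l)%N.
Proof.
move=> ij; rewrite (bigD1 i) //= (bigD1 j) /=; last by rewrite eq_sym.
by rewrite addnA.
Qed.

Lemma split2r {R : numDomainType} {k : nat} (i j : 'I_k) (F : 'I_k -> R) : i != j ->
  \sum_(l < k) F l = F i + F j + \sum_(l < k | (l != i) && (l != j)) F l.
Proof.
move=> ij; rewrite (bigD1 i) //= (bigD1 j) /=; last by rewrite eq_sym.
by rewrite addrA.
Qed.

Definition swapf {k : nat} (i j : 'I_k) (x : 'I_k -> nat) : 'I_k -> nat :=
  fun l => if l == i then x j else if l == j then x i else x l.

Lemma Hfun01 (R : numDomainType) n : Hfun R n = if (0 < n)%N then 1 else 0.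
Proof. rewrite /Hfun; case: n => [|n] /=. by rewrite minn0. by rewrite (minn_idPl _). Qed.

Section S.
Variables (R : realFieldType) (k N alpha : nat) (t : 'I_k -> R).
Hypothesis ht_nonincr : forall i j : 'I_k, (i <= j)%N -> t j <= t i.
Hypothesis ht_nonneg : forall i : 'I_k, 0 <= t i.

Lemma feas_le (x : 'I_k -> nat) l : feasible N x -> (x l <= N)%N.
Proof.
rewrite /feasible (bigD1 l) //= => H; lia.
Qed.

Lemma adv_le (x : 'I_k -> nat) (d : {ffun 'I_k -> 'I_N.+1}) :
  admissible alpha x (fun i => nat_of_ord (d i)) ->
  adv_obj N alpha t x <= attacked_value t x (fun i => nat_of_ord (d i)).
Proof. by move=> H; apply: bigmin_le_cond. Qed.

Lemma adv_le' (x : 'I_k -> nat) (d : 'I_k -> nat) : feasible N x ->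
  admissible alpha x d -> adv_obj N alpha t x <= attacked_value t x d.
Proof.
move=> fx ad.
have dle : forall l, (d l <= N)%N.
  move=> l; move: ad => /andP[_ /forallP /(_ l)] h.
  have := @feas_le x l fx; lia.
set g := [ffun l => (inord (d l) : 'I_N.+1)].
have e : d = (fun i => nat_of_ord (g i)).
  by apply: functional_extensionality => l; rewrite /g ffunE inordK // ltnS.
rewrite e in ad *; exact: adv_le.
Qed.

Lemma swap_core (x : 'I_k -> nat) (i j : 'I_k) (d' : 'I_k -> nat) :
  (i < j)%N -> (x i < x j)%N ->
  admissible alpha (swapf i j x) d' ->
  exists d, admissible alpha x d /\
     attacked_value t x d <= attacked_value t (swapf i j x) d'.
Proof.
move=> ltij ltx /andP[sd' /forallP dx'].
have ij : i != j by rewrite neq_ltn ltij.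
have ji : j != i by rewrite eq_sym.
have di' := dx' i; have dj' := dx' j.
rewrite /swapf eqxx (negbTE ji) eqxx in di' dj'.
set bad := (d' i == x j) && (d' j < x i)%N.
exists (fun l => if l == i then (if bad then x i else d' j)
              else if l == j then (if bad then 0 else d' i) else d' l)%N.
split.
  apply/andP; split.
    move: sd'; rewrite !(@split2n _ i j _ ij) eqxx (negbTE ji) eqxx.
    rewrite [in X in (_ -> X)](eq_bigr d'); last by move=> l /andP[/negbTE -> /negbTE ->].
    rewrite /bad; case: eqP => [e|] /=; last lia.
    case: ltnP => /= ?; lia.
  apply/forallP => l; case: eqP => [->|/eqP li].
    rewrite /bad; case: eqP => /= [e|ne]; first by case: ltnP.
    by [].
  case: eqP => [->|/eqP lj].
    rewrite /bad; case: eqP => /= [e|ne]; first by case: ltnP => //= _; lia.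
    done.
  by have := dx' l; rewrite /swapf (negbTE li) (negbTE lj).
rewrite /attacked_value (@split2r _ _ i j _ ij) [in X in _ <= X](@split2r _ _ i j _ ij).
rewrite eqxx (negbTE ji) eqxx /swapf eqxx (negbTE ji) eqxx.
rewrite (eq_bigr (fun l => t l * Hfun R (x l - d' l)%N)); last first.
  by move=> l /andP[/negbTE -> /negbTE ->].
rewrite [in X in _ <= X](eq_bigr (fun l => t l * Hfun R (x l - d' l)%N)); last first.
  by move=> l /andP[/negbTE -> /negbTE ->].
rewrite lerD2r.
have tij := ht_nonincr _ _ (ltnW ltij).
have t0 := ht_nonneg j.
rewrite /bad.
case: (d' i =P x j) => [e|ne] /=; [case: (ltnP (d' j) (x i)) => h /= |].
- rewrite e !subnn subn0 !Hfun01 /= subn_gt0 h (_ : (0 < x j)%N); last by lia.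
  lra.
- rewrite e subnn (_ : (x i - d' j = 0)%N); last by apply/eqP; rewrite subn_eq0.
  rewrite !Hfun01 /=; lra.
- have lt : (d' i < x j)%N by rewrite ltn_neqAle di' andbT; apply/eqP.
  rewrite !Hfun01 (_ : (0 < x j - d' i)%N = true); last by rewrite subn_gt0.
  case: (0 < x i - d' j)%N; lra.
Qed.

Lemma swap_ge (x : 'I_k -> nat) (i j : 'I_k) : feasible N x ->
  (i < j)%N -> (x i < x j)%N ->
  adv_obj N alpha t x <= adv_obj N alpha t (swapf i j x).
Proof.
move=> fx ltij ltx.
have key : forall d' : 'I_k -> nat, admissible alpha (swapf i j x) d' ->
    adv_obj N alpha t x <= attacked_value t (swapf i j x) d'.
  move=> d' ad; have [d [ad1 le1]] := @swap_core x i j d' ltij ltx ad.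
  exact: le_trans (@adv_le' x d fx ad1) le1.
apply: le_bigmin; first apply: key.
  apply/andP; split; first by rewrite big1.
  by apply/forallP.
by move=> d ad; apply: key.
Qed.

End S.

Theorem proposition1 (R : realFieldType) (k N alpha : nat) (t : 'I_k -> R)
  (hk : (1 <= k)%N) (halpha : (alpha <= N)%N)
  (ht_nonincr : forall i j : 'I_k, (i <= j)%N -> t j <= t i)
  (ht_nonneg : forall i : 'I_k, 0 <= t i) :
  exists xt : 'I_k -> nat,
    feasible N xt /\
    (forall x : 'I_k -> nat, feasible N x ->
       adv_obj N alpha t x <= adv_obj N alpha t xt) /\
    (forall i j : 'I_k, (i <= j)%N -> (xt j <= xt i)%N).
Proof.
pose conv (g : {ffun 'I_k -> 'I_N.+1}) := fun i => nat_of_ord (g i).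
pose f (g : {ffun 'I_k -> 'I_N.+1}) := adv_obj N alpha t (conv g).
pose fb (g : {ffun 'I_k -> 'I_N.+1}) := (\sum_(i < k) conv g i <= N)%N.
have tofun : forall x, feasible N x -> x = conv [ffun l => inord (x l)].
  move=> x fx; apply: functional_extensionality => l.
  rewrite /conv ffunE inordK // ltnS; move: fx; rewrite /feasible (bigD1 l) //=; lia.
pose g0 : {ffun 'I_k -> 'I_N.+1} := [ffun=> ord0].
have fb0 : fb g0 by rewrite /fb big1 // => l _; rewrite /conv ffunE.
pose gmax := [arg max_(g > g0 | fb g) f g]%O.
have [gm fbm hmax] : exists2 gm, fb gm & forall g, fb g -> f g <= f gm.
  case: (arg_maxP f fb0) => g fg h; exists g => // g' /h //.
pose Phi (g : {ffun 'I_k -> 'I_N.+1}) := (\sum_(i < k) conv g i * (k - i))%N.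
pose P2 (g : {ffun 'I_k -> 'I_N.+1}) := fb g && (f g == f gm).
have P2m : P2 gm by rewrite /P2 fbm eqxx.
have [gs /andP[fbs /eqP fs] hs] : exists2 gs, P2 gs & forall g, P2 g -> (Phi g <= Phi gs)%N.
  case: (arg_maxnP Phi P2m) => g ? h; exists g => // g' /h //.
exists (conv gs); split; first exact: fbs.
split.
  move=> x fx; rewrite (tofun x fx).
  have := hmax [ffun l => inord (x l)]; rewrite -fs; apply.
  by rewrite /fb -(tofun x fx).
move=> i j lij; rewrite leqNgt; apply/negP => ltx.
have ij : i != j by apply: contraTneq ltx => ->; rewrite ltnn.
have ltij : (i < j)%N by rewrite ltn_neqAle lij andbT.
have ji : j != i by rewrite eq_sym.
pose x' := swapf i j (conv gs).
have fx' : feasible N x'.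
  rewrite /feasible (@split2n _ i j _ ij) /x' /swapf eqxx (negbTE ji) eqxx.
  rewrite (eq_bigr (conv gs)); last by move=> l /andP[/negbTE -> /negbTE ->].
  move: fbs; rewrite /fb (@split2n _ i j _ ij) => h; rewrite [(conv gs j + _)%N]addnC; exact: h.
have le1 := @swap_ge R k N alpha t ht_nonincr ht_nonneg (conv gs) i j fbs ltij ltx.
set g' := [ffun l => (inord (x' l) : 'I_N.+1)].
have ex' : x' = conv g' := tofun x' fx'.
have P2' : P2 g'.
  rewrite /P2 /fb -ex' fx' /=; apply/eqP/le_anti; rewrite hmax /=; last by rewrite /fb -ex'.
  by rewrite -fs /f -ex'.
have := hs g' P2'; apply/negP; rewrite -ltnNge.
rewrite /Phi -ex' !(@split2n _ i j _ ij) /x' /swapf eqxx (negbTE ji) eqxx.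
rewrite [in X in (_ < X)%N](eq_bigr (fun l => conv gs l * (k - l))%N); last first.
  by move=> l /andP[/negbTE -> /negbTE ->].
rewrite ltn_add2r.
have jk := ltn_ord j.
nia.
Qed.
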